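(* Let $y$ be a Lyndon word with $|y|>1$, written as $y=x^kzb$ where $x$ is a Lyndon word, $k\ge 1$, $|x|$ is the smallest period of $x^kz$, $z$ is a proper prefix of $x$ (possibly empty), $a$ is the letter such that $za$ is a prefix of $x$, and $b$ is a letter with $a<b$. Let $1\le e\le k$ and let $u,v$ be non-empty proper prefixes of $x$ such that $x^eu$ and $x^ev$ are proper prefixes of $y$. If $u\prec v$, then $x^eu\prec x^ev$.
   Context: Lexicographic order $<$ on finite and infinite words: $u<v$ if $u$ is a proper prefix of $v$, or $u=ras$, $v=rbt$ with letters $a<b$. A Lyndon word is a non-empty word strictly smaller than each of its proper non-empty suffixes. Infinite ordering: for non-empty words $u,v$, $u\prec v$ iff $u^\infty<v^\infty$, or $u^\infty=v^\infty$ and $|u|>|v|$, where $u^\infty=uuu\cdots$. A period of a word $w$ is an integer $p\ge1$ with $w[i]=w[i+p]$ whenever both are defined. *)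

(* Defs.v *)
From mathcomp Require Import all_boot all_order.
Set Implicit Arguments. Unset Strict Implicit. Unset Printing Implicit Defensive.
Import Order.TTheory.
Local Open Scope order_scope.

Section Words.
Variables (d : Order.disp_t) (T : orderType d).

Definition proper_prefix (u v : seq T) : bool := prefix u v && (size u < size v)%N.

Definition lex_lt (u v : seq T) : Prop :=
  proper_prefix u v \/
  exists (r s t : seq T) (a b : T), u = r ++ a :: s /\ v = r ++ b :: t /\ a < b.

Definition lyndon (w : seq T) : Prop :=
  w <> [::] /\ forall i, (0 < i < size w)%N -> lex_lt w (drop i w).

Definition is_period (p : nat) (w : seq T) : Prop :=
  (1 <= p)%N /\ forall i, (i + p < size w)%N -> onth w i = onth w (i + p).

Definition smallest_period (p : nat) (w : seq T) : Prop :=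
  is_period p w /\ forall q, is_period q w -> (p <= q)%N.

Definition wpow (u : seq T) (k : nat) : seq T := flatten (nseq k u).

(* infinite words as nat -> option T; u^oo for non-empty u has only Some values *)
Definition powinf (u : seq T) : nat -> option T := fun i => onth u (i %% size u).

Definition inf_lt (f g : nat -> option T) : Prop :=
  exists n, (forall i, (i < n)%N -> f i = g i) /\
    exists a b, f n = Some a /\ g n = Some b /\ a < b.

Definition inf_eq (f g : nat -> option T) : Prop := forall i, f i = g i.

Definition prec (u v : seq T) : Prop :=
  inf_lt (powinf u) (powinf v) \/
  (inf_eq (powinf u) (powinf v) /\ (size v < size u)%N).

End Words.

(* Main.v *)
Require Import Defs.
From mathcomp Require Import all_boot all_order zify.
Import Order.TTheory.
Set Implicit Arguments. Unset Strict Implicit.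
Local Open Scope order_scope.

Section Aux.
Variables (d : Order.disp_t) (T : orderType d) (a0 : T).

Definition diffat (s s' : seq T) D :=
  (D < size s)%N /\ (forall k, (k < D)%N -> nth a0 s k = nth a0 s' k) /\
  nth a0 s D < nth a0 s' D.

Lemma lex_diff s s' : size s = size s' -> lex_lt s s' -> exists D, diffat s s' D.
Proof.
move=> Hs [/andP [_]|[r [s1 [t1 [a [b [E1 [E2 Hab]]]]]]]].
  by rewrite Hs ltnn.
exists (size r); rewrite /diffat E1 E2 !nth_cat ltnn subnn /= size_cat /=.
split; first by rewrite addnS ltnS leq_addr.
by split => // k Hk; rewrite !nth_cat Hk.
Qed.

Lemma diff_lex s s' D : size s = size s' -> diffat s s' D -> lex_lt s s'.
Proof.
move=> Hs [HD [Hk Hl]]; right.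
exists (take D s), (drop D.+1 s), (drop D.+1 s'), (nth a0 s D), (nth a0 s' D).
split; first by rewrite -drop_nth // cat_take_drop.
split; last by [].
have -> : take D s = take D s'.
  apply: (eq_from_nth (x0 := a0)); first by rewrite !size_take Hs.
  move=> i; rewrite size_take HD => HiD.
  by rewrite !nth_take // Hk.
by rewrite -drop_nth ?cat_take_drop // -Hs.
Qed.

Definition W (u : seq T) n := nth a0 u (n %% size u).

Lemma powinfE u n : (0 < size u)%N -> powinf u n = Some (W u n).
Proof.
move=> Hu; rewrite /powinf /W onthE (nth_map a0) //.
by rewrite ltn_mod.
Qed.

Lemma W_small u n : (n < size u)%N -> W u n = nth a0 u n.
Proof. by move=> H; rewrite /W modn_small. Qed.

Lemma W_shift u n : (size u <= n)%N -> W u n = W u (n - size u).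
Proof. by move=> H; rewrite /W -{1}(subnK H) modnDr. Qed.

Lemma W_cat u v D : (0 < size u)%N -> (D < size u + size v)%N ->
  (forall k, (k < D)%N -> nth a0 (u ++ v) k = nth a0 (v ++ u) k) ->
  forall n, (n <= D)%N -> W u n = nth a0 (u ++ v) n.
Proof.
move=> Hu HD Hag n; elim: n {-2}n (leqnn n) => [|m IH] n.
  rewrite leqn0 => /eqP -> _; by rewrite W_small // nth_cat Hu.
move=> Hnm HnD.
case: (ltnP n (size u)) => Hn; first by rewrite W_small // nth_cat Hn.
rewrite W_shift // IH; last first.
- lia.
- lia.
rewrite Hag; last by lia.
rewrite nth_cat (nth_cat _ u).
have -> : (n < size u)%N = false by lia.
have -> : (n - size u < size v)%N by lia.
done.
Qed.

Lemma P1 u v : (0 < size u)%N -> (0 < size v)%N ->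
  lex_lt (u ++ v) (v ++ u) -> inf_lt (@powinf d T u) (@powinf d T v).
Proof.
move=> Hu Hv H.
have Hs : size (u++v) = size (v++u) by rewrite !size_cat addnC.
have [D [HD [Hag Hlt]]] := lex_diff Hs H.
rewrite size_cat in HD.
have E1 := W_cat Hu HD Hag.
have HD' : (D < size v + size u)%N by rewrite addnC.
have E2 := W_cat Hv HD' (fun k hk => esym (Hag k hk)).
exists D; split.
  move=> i Hi; rewrite !powinfE // E1 ?E2 ?Hag //; exact: ltnW.
exists (W u D), (W v D); rewrite !powinfE // E1 // E2 //.
Qed.

Lemma P2 u v : (0 < size u)%N -> (0 < size v)%N ->
  u ++ v = v ++ u -> inf_eq (@powinf d T u) (@powinf d T v).
Proof.
move=> Hu Hv H i; rewrite !powinfE //; congr Some.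
have HD : (size u + size v).-1 < size u + size v by lia.
have Hag : forall k, (k < (size u + size v).-1)%N -> nth a0 (u ++ v) k = nth a0 (v ++ u) k.
  by move=> k _; rewrite H.
have HD' : ((size u + size v).-1 < size v + size u)%N by lia.
have E1 := W_cat Hu HD Hag.
have E2 := W_cat Hv HD' (fun k hk => esym (Hag k hk)).
elim: i {-2}i (leqnn i) => [|m IH] n.
  by rewrite leqn0 => /eqP ->; rewrite E1 // E2 // H.
move=> Hnm.
case: (ltnP n (size u + size v)) => Hn.
  by rewrite E1 ?E2 ?H //; lia.
rewrite W_shift; last by lia.
rewrite IH; last by lia.
rewrite W_shift; last by lia.
rewrite -IH; last by lia.
rewrite (W_shift (u:=v)); last by lia.
rewrite -IH; last by lia.
rewrite (W_shift (u:=u) (n:=n - size v)); last by lia.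
by rewrite -!subnDA addnC.
Qed.
End Aux.

Section Aux2.
Variables (d : Order.disp_t) (T : orderType d).

Lemma inf_asym (f g : nat -> option T) : inf_lt f g -> inf_lt g f -> False.
Proof.
move=> [n1 [H1 [a1 [b1 [Fa [Gb Hab]]]]]] [n2 [H2 [a2 [b2 [Ga [Fb Hab2]]]]]].
case: (ltngtP n1 n2) => Hn.
- move: (H2 _ Hn); rewrite Fa Gb => -[E]; by move: Hab; rewrite E ltxx.
- move: (H1 _ Hn); rewrite Ga Fb => -[E]; by move: Hab2; rewrite E ltxx.
- subst n2; move: Ga Fb; rewrite Fa Gb => -[E1] -[E2]; subst.
  by move: (lt_trans Hab Hab2); rewrite ltxx.
Qed.

Lemma inf_lt_eq (f g : nat -> option T) : inf_lt f g -> inf_eq f g -> False.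
Proof.
move=> [n1 [H1 [a1 [b1 [Fa [Gb Hab]]]]]] E.
move: (E n1); rewrite Fa Gb => -[E']; by move: Hab; rewrite E' ltxx.
Qed.

Lemma lex_cat (w p q : seq T) : lex_lt p q -> lex_lt (w ++ p) (w ++ q).
Proof.
move=> [/andP [Hp Hs]|[r [s1 [t1 [a [b [E1 [E2 Hab]]]]]]]].
  left; apply/andP; split; first by rewrite prefix_catr // eqxx.
  by rewrite !size_cat ltn_add2l.
right; exists (w ++ r), s1, t1, a, b; by rewrite E1 E2 !catA.
Qed.

Lemma trich (s s' : seq T) : size s = size s' ->
  lex_lt s s' \/ s = s' \/ lex_lt s' s.
Proof.
elim: s s' => [|x s IH] [|y s'] //=; first by right; left.
move=> [] /IH [H|[H|H]].
- case: (ltgtP x y) => Hxy.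
  + left; right; exists [::], s, s', x, y; done.
  + right; right; right; exists [::], s', s, y, x; done.
  + subst; left; exact: (lex_cat [:: y] H).
- case: (ltgtP x y) => Hxy.
  + left; right; exists [::], s, s', x, y; done.
  + right; right; right; exists [::], s', s, y, x; done.
  + by subst; right; left.
- case: (ltgtP x y) => Hxy.
  + left; right; exists [::], s, s', x, y; done.
  + right; right; right; exists [::], s', s, y, x; done.
  + subst; right; right; exact: (lex_cat [:: y] H).
Qed.
End Aux2.

Section Aux3.
Variables (d : Order.disp_t) (T : orderType d).

Lemma prec_char (a0 : T) (u v : seq T) : (0 < size u)%N -> (0 < size v)%N ->
  prec u v -> lex_lt (u ++ v) (v ++ u) \/ (u ++ v = v ++ u /\ (size v < size u)%N).
Proof.
move=> Hu Hv Hp.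
have Hs : size (u++v) = size (v++u) by rewrite !size_cat addnC.
case: (trich Hs) => [H|[H|H]]; first by left.
- right; split => //; case: Hp => [Hl|[_ Hl]] //.
  by case: (inf_lt_eq Hl (P2 a0 Hu Hv H)).
- exfalso; have Hl := P1 a0 Hv Hu H.
  case: Hp => [Hl'|[He _]]; first exact: inf_asym Hl Hl'.
  by apply: (inf_lt_eq Hl) => i; rewrite He.
Qed.

Lemma prec_of (a0 : T) (u v : seq T) : (0 < size u)%N -> (0 < size v)%N ->
  lex_lt (u ++ v) (v ++ u) -> prec u v.
Proof. by move=> Hu Hv H; left; apply: P1. Qed.

Lemma lex_ext (p q p2 q2 : seq T) : size p = size q -> lex_lt p q ->
  lex_lt (p ++ p2) (q ++ q2).
Proof.
move=> Hs [/andP [_]|[r [s1 [t1 [a [b [E1 [E2 Hab]]]]]]]]; first by rewrite Hs ltnn.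
right; exists r, (s1 ++ p2), (t1 ++ q2), a, b; by rewrite E1 E2 -!catA.
Qed.
End Aux3.

Theorem mainTheorem4 (d : Order.disp_t) (T : orderType d)
  (y x z : seq T) (k e : nat) (a b : T) (u v : seq T) :
  lyndon y -> (1 < size y)%N ->
  lyndon x -> (1 <= k)%N ->
  y = wpow x k ++ z ++ [:: b] ->
  smallest_period (size x) (wpow x k ++ z) ->
  proper_prefix z x ->
  prefix (rcons z a) x ->
  a < b ->
  (1 <= e <= k)%N ->
  u <> [::] -> proper_prefix u x ->
  v <> [::] -> proper_prefix v x ->
  proper_prefix (wpow x e ++ u) y ->
  proper_prefix (wpow x e ++ v) y ->
  prec u v -> prec (wpow x e ++ u) (wpow x e ++ v).
Proof.
move=> _ _ [_ Hlx] _ _ _ _ _ _ /andP [He _] Hu0 /andP [/prefixP [xu Exu] Hux]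
  Hv0 /andP [/prefixP [xv Exv] Hvx] _ _ Hp.
have Hu : (0 < size u)%N by case: u Hu0 {Exu Hux Hp}.
have Hv : (0 < size v)%N by case: v Hv0 {Exv Hvx Hp}.
case: e He => // e' _.
have -> : wpow x e'.+1 = x ++ wpow x e' by [].
move: (wpow x e') => W'.
apply: (prec_of a); rewrite ?size_cat ?addn_gt0 ?Hu ?Hv ?orbT //.
rewrite -!catA; apply: (lex_cat x); apply: lex_cat.
case: (prec_char a Hu Hv Hp) => [H|[H Hs]].
- have -> : u ++ x ++ W' ++ v = (u ++ v) ++ (xv ++ W' ++ v).
    by rewrite {1}Exv -!catA.
  have -> : v ++ x ++ W' ++ u = (v ++ u) ++ (xu ++ W' ++ u).
    by rewrite {1}Exu -!catA.
  apply: lex_ext => //; by rewrite !size_cat addnC.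
- have Ev : v = take (size v) u.
    by have := congr1 (take (size v)) (etrans (esym Exv) Exu); rewrite take_size_cat // take_cat Hs.
  set t := drop (size v) u.
  have Eu : u = v ++ t by rewrite /t {1}Ev cat_take_drop.
  have Etv : t ++ v = v ++ t.
    have := congr1 (drop (size v)) H.
    by rewrite Eu -catA !drop_size_cat.
  have Ex : x = t ++ (v ++ xu) by rewrite {1}Exu Eu -Etv catA.
  have Ht0 : (0 < size t)%N by move: Hs; rewrite Eu size_cat; lia.
  have Htx : (size t < size x)%N by move: Hux; rewrite Eu size_cat; lia.
  have := Hlx (size t); rewrite Ht0 Htx => /(_ isT).
  rewrite {2}Ex drop_size_cat //.
  move=> [/andP [_]|[r [s1 [t1 [a1 [b1 [E1 [E2 Hab]]]]]]]].
    by rewrite {1}Ex size_cat; lia.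
  rewrite {1}Eu -catA.
  have -> : v ++ x ++ W' ++ u = v ++ t ++ (v ++ xu) ++ W' ++ u.
    by rewrite {1}Ex -!catA.
  rewrite catA [in X in lex_lt _ X]catA; apply: lex_cat.
  rewrite E2 {1}E1; right.
  exists r, (s1 ++ W' ++ v), (t1 ++ W' ++ u), a1, b1.
  by rewrite -!catA.
Qed.
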